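(* Let $\psi:\mathbb{R}\to\mathbb{R}$ be the Haar wavelet, \[ \psi(t)=\begin{cases}1 & 0\le t<1/2,\\ -1 & 1/2\le t<1,\\ 0 & \text{otherwise},\end{cases} \] and let $f:\mathbb{R}\to\mathbb{R}$ be a continuous and bounded function. Let $T>0$. Suppose that \[ Wf(u,2T):=\int_{-\infty}^{+\infty} f(t)\,\frac{1}{\sqrt{2T}}\,\psi\!\left(\frac{t-u}{2T}\right)\mathrm{d}t=0\quad\text{for all } u\in\mathbb{R}. \] Then $f$ is $T$-periodic, i.e. $f(t+T)=f(t)$ for all $t\in\mathbb{R}$.
   Context: For a wavelet $\psi$ and $u\in\mathbb{R}$, $s>0$, the daughter wavelet is $\psi_{u,s}(t)=\frac{1}{\sqrt{s}}\psi\left(\frac{t-u}{s}\right)$, and the continuous wavelet transform of $f$ at time $u$ and scale $s$ is $Wf(u,s)=\int_{-\infty}^{+\infty} f(t)\,\psi_{u,s}^*(t)\,\mathrm{d}t$ (complex conjugate; here $\psi$ is real). Since the Haar wavelet has compact support and $f$ is bounded and continuous, this integral is well defined even though $f$ need not lie in $L^2(\mathbb{R})$. *)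

(* Defs.v *)
From Stdlib Require Import Reals Lra.
From Coquelicot Require Import Coquelicot.
Open Scope R_scope.

Definition haar (t : R) : R :=
  if Rle_dec 0 t then
    (if Rlt_dec t (1/2) then 1
     else if Rlt_dec t 1 then -1 else 0)
  else 0.

Definition daughter (psi : R -> R) (u s : R) (t : R) : R :=
  / sqrt s * psi ((t - u) / s).

(* "Wf(u,s) = w": the (improper, over the whole real line) integral of
   f(t) psi_{u,s}(t) exists and equals w.  (psi is real, so no conjugation.) *)
Definition CWT_is (psi f : R -> R) (u s w : R) : Prop :=
  is_RInt_gen (fun t => f t * daughter psi u s t)
    (Rbar_locally m_infty) (Rbar_locally p_infty) w.

(* Main.v *)
Require Import Defs.
From Stdlib Require Import Reals Lra.
From Coquelicot Require Import Coquelicot.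
Open Scope R_scope.


Lemma gen_of_eventually (h : R -> R) (Fa Fb : (R -> Prop) -> Prop) (K : R) :
  Filter Fa -> Filter Fb ->
  filter_prod Fa Fb (fun ab => is_RInt h (fst ab) (snd ab) K) ->
  is_RInt_gen h Fa Fb K.
Proof.
  intros HFa HFb H P HP.
  unfold filtermapi.
  apply filter_imp with (2 := H).
  intros ab Hab. exists K. split; auto.
  now apply locally_singleton.
Qed.

Ltac rring := match goal with |- ?a = ?b => change (@eq R a b) end; ring.

Lemma is_RInt_zero (a b : R) : is_RInt (fun _ : R => 0) a b 0.
Proof.
  generalize (@is_RInt_const R_NormedModule a b 0). unfold scal; simpl; unfold mult; simpl.
  now rewrite Rmult_0_r.
Qed.

Lemma haar_pieces (u T t : R) : 0 < T ->
  (t < u -> haar ((t - u) / (2*T)) = 0) /\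
  (u < t < u + T -> haar ((t - u) / (2*T)) = 1) /\
  (u + T < t < u + 2*T -> haar ((t - u) / (2*T)) = -1) /\
  (u + 2*T < t -> haar ((t - u) / (2*T)) = 0).
Proof.
  intros HT.
  set (x := (t - u) / (2*T)).
  assert (Hx : t - u = x * (2*T)) by (unfold x; field; lra).
  unfold haar.
  repeat split; intros; destruct (Rle_dec 0 x); try destruct (Rlt_dec x (1/2));
    try destruct (Rlt_dec x 1); try reflexivity; exfalso; nra.
Qed.

Lemma key_rel (f : R -> R) (T u : R) :
  (forall x, continuous f x) -> 0 < T ->
  CWT_is haar f u (2 * T) 0 ->
  RInt f u (u + T) = RInt f (u + T) (u + 2 * T).
Proof.
  intros Hc HT H.
  set (c := / sqrt (2 * T)).
  assert (Hc0 : 0 < c) by (unfold c; apply Rinv_0_lt_compat, sqrt_lt_R0; lra).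
  set (h := fun t => f t * daughter haar u (2 * T) t).
  assert (Hex : forall a b, ex_RInt f a b)
    by (intros; apply (@ex_RInt_continuous R_CompleteNormedModule); intros; apply Hc).
  set (K := plus (plus (plus 0 (c * RInt f u (u+T))) (- (c * RInt f (u+T) (u+2*T)))) 0).
  assert (HK : is_RInt_gen h (Rbar_locally m_infty) (Rbar_locally p_infty) K).
  { apply gen_of_eventually; try apply Rbar_locally_filter.
    apply Filter_prod with (fun a => a < u) (fun b => u + 2*T < b).
    - exists u; auto.
    - exists (u + 2*T); auto.
    - intros a b Ha Hb; cbn [fst snd].
      unfold K; apply (@is_RInt_Chasles R_NormedModule) with (u + 2*T).
      2: { apply (@is_RInt_ext R_NormedModule) with (fun _ => 0).
           { intros x [Hx1 Hx2]. rewrite Rmin_left in Hx1 by lra.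
             unfold h, daughter. rewrite (proj2 (proj2 (proj2 (haar_pieces u T x HT)))) by lra. rring. }
           apply is_RInt_zero. }
      apply (@is_RInt_Chasles R_NormedModule) with (u + T).
      2: { apply (@is_RInt_ext R_NormedModule) with (fun y => scal (-c) (f y)).
           { intros x [Hx1 Hx2]. rewrite Rmin_left in Hx1 by lra. rewrite Rmax_right in Hx2 by lra.
             unfold h, daughter. rewrite (proj1 (proj2 (proj2 (haar_pieces u T x HT)))) by lra.
             fold c. unfold scal; simpl; unfold mult; simpl; rring. }
           replace (- (c * RInt f (u + T) (u + 2 * T))) with (scal (-c) (RInt f (u + T) (u + 2 * T)))
             by (unfold scal; simpl; unfold mult; simpl; rring).
           apply (@is_RInt_scal R_NormedModule), (@RInt_correct R_CompleteNormedModule), Hex. }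
      apply (@is_RInt_Chasles R_NormedModule) with u.
      { apply (@is_RInt_ext R_NormedModule) with (fun _ => 0).
        { intros x [Hx1 Hx2]. rewrite Rmax_right in Hx2 by lra.
          unfold h, daughter. rewrite (proj1 (haar_pieces u T x HT)) by lra. rring. }
        apply is_RInt_zero. }
      apply (@is_RInt_ext R_NormedModule) with (fun y => scal c (f y)).
      { intros x [Hx1 Hx2]. rewrite Rmin_left in Hx1 by lra. rewrite Rmax_right in Hx2 by lra.
        unfold h, daughter. rewrite (proj1 (proj2 (haar_pieces u T x HT))) by lra.
        fold c. unfold scal; simpl; unfold mult; simpl; rring. }
      apply (@is_RInt_scal R_NormedModule), (@RInt_correct R_CompleteNormedModule), Hex. }
  assert (E1 := is_RInt_gen_unique _ _ HK).
  assert (E2 := is_RInt_gen_unique _ _ H).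
  fold h in E2. rewrite E1 in E2. unfold K, plus in E2; simpl in E2.
  apply Rmult_eq_reg_l with c; nra.
Qed.



Lemma aux_eq (p q : R) : p = q + p - q. Proof. ring. Qed.

Lemma second_diff (f : R -> R) (T : R) :
  (forall x, continuous f x) ->
  (forall u, RInt f u (u + T) = RInt f (u + T) (u + 2 * T)) ->
  forall u, 2 * f (u + T) - f u - f (u + 2 * T) = 0.
Proof.
  intros Hc H u.
  set (P := fun x => RInt f 0 x).
  assert (Hex : forall a b, ex_RInt f a b)
    by (intros; apply (@ex_RInt_continuous R_CompleteNormedModule); intros; apply Hc).
  assert (HP : forall x, is_derive P x (f x)).
  { intros x. apply (@is_derive_RInt R_NormedModule f P 0 x).
    - apply filter_forall. intros y. apply (@RInt_correct R_CompleteNormedModule), Hex.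
    - apply Hc. }
  assert (HI : forall a b, RInt f a b = P b - P a).
  { intros a b. unfold P. rewrite <- (RInt_Chasles f 0 a b) by apply Hex.
    unfold plus; simpl. apply aux_eq. }
  assert (HD : is_derive (fun u => 2 * P (u + T) - P u - P (u + 2 * T)) u
                 (2 * f (u + T) - f u - f (u + 2 * T))).
  { auto_derive.
    - repeat split; eexists; apply HP.
    - rewrite !(is_derive_unique _ _ _ (HP _)). ring. }
  assert (HD0 : is_derive (fun _ : R => 0) u (2 * f (u + T) - f u - f (u + 2 * T))).
  { apply is_derive_ext with (2 := HD). intros t.
    transitivity (RInt f t (t+T) - RInt f (t+T) (t+2*T)).
    { rewrite !HI. rring. }
    rewrite H. rring. }
  apply is_derive_unique in HD0. rewrite Derive_const in HD0. auto.
Qed.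

Lemma final (f : R -> R) (T M : R) :
  (forall x, Rabs (f x) <= M) ->
  (forall u, 2 * f (u + T) - f u - f (u + 2 * T) = 0) ->
  forall t, f (t + T) = f t.
Proof.
  intros HM H t.
  set (g := fun u => f (u + T) - f u).
  assert (Hg : forall u, g (u + T) = g u).
  { intros u. unfold g. replace (u + T + T) with (u + 2 * T) by ring.
    specialize (H u). lra. }
  assert (Hgn : forall n u, g (u + INR n * T) = g u).
  { induction n; intros u.
    - simpl. f_equal. ring.
    - rewrite S_INR. replace (u + (INR n + 1) * T) with (u + INR n * T + T) by ring.
      rewrite Hg. apply IHn. }
  assert (Hfn : forall n, f (t + INR n * T) = f t + INR n * g t).
  { induction n.
    - simpl. replace (t + 0 * T) with t by ring. ring.
    - rewrite S_INR. replace (t + (INR n + 1) * T) with (t + INR n * T + T) by ring.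
      assert (E : f (t + INR n * T + T) = f (t + INR n * T) + g (t + INR n * T))
        by (unfold g; ring).
      rewrite E, IHn, Hgn. ring. }
  destruct (Req_dec (g t) 0) as [Z|NZ].
  - unfold g in Z. lra.
  - exfalso.
    destruct (INR_archimed (Rabs (g t)) (2 * M)) as [n Hn].
    { apply Rabs_pos_lt; auto. }
    specialize (Hfn n).
    assert (A1 := HM (t + INR n * T)). assert (A2 := HM t).
    assert (Rabs (INR n * g t) <= 2 * M).
    { replace (INR n * g t) with (f (t + INR n * T) - f t) by lra.
      eapply Rle_trans. apply Rabs_triang. rewrite Rabs_Ropp. lra. }
    rewrite Rabs_mult, Rabs_right in H0 by (apply Rle_ge, pos_INR). lra.
Qed.

Theorem proposition2p1 (f : R -> R) (T : R) :
  (forall x, continuous f x) ->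
  (exists M, forall x, Rabs (f x) <= M) ->
  0 < T ->
  (forall u, CWT_is haar f u (2 * T) 0) ->
  forall t, f (t + T) = f t.
Proof.
  intros Hc [M HM] HT H.
  apply (final f T M HM).
  apply second_diff; auto.
  intros u. apply key_rel; auto.
Qed.
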